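(* Let $\mathbf{f}$ be the Fibonacci word. For every index $x\ge0$ of $\mathbf{f}$ and every positive integer $n$, there is a $\lfloor F_n\frac{\sqrt5}{2}\rfloor$-antipower with block length $2F_n$ starting at position $x$ of $\mathbf{f}$.
   Context: The Fibonacci word is $\mathbf{f}=\sigma^{\omega}(0)=0100101001001\cdots$, the fixed point of the morphism $\sigma(0)=01$, $\sigma(1)=0$; it is $0$-indexed. $F_1=F_2=1$, $F_n=F_{n-1}+F_{n-2}$. A $k$-antipower is a word that is the concatenation of $k$ pairwise distinct words (blocks) of equal length; that common length is the block length. *)

(* Defs.v *)
From mathcomp Require Import all_boot.
Set Implicit Arguments. Unset Strict Implicit. Unset Printing Implicit Defensive.

Definition sigma_letter (a : nat) : seq nat := if a == 0 then [:: 0; 1] else [:: 0].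
Definition sigma (w : seq nat) : seq nat := flatten (map sigma_letter w).

(* sigma^k(0) has length F_{k+2} >= k+1, and each is a prefix of the next,
   so the i-th letter of the fixed point sigma^omega(0) is the i-th letter of
   sigma^(i+1)(0). *)
Definition fibw (i : nat) : nat := nth 0 (iter i.+1 sigma [:: 0]) i.

Fixpoint fib (n : nat) : nat :=
  match n with
  | 0 => 0
  | S m => match m with 0 => 1 | S p => fib m + fib p end
  end.

Definition factor (p m : nat) : seq nat := mkseq (fun i => fibw (p + i)) m.

Definition antipower_at (x k m : nat) : Prop :=
  forall i j, i < j -> j < k -> factor (x + i * m) m != factor (x + j * m) m.

(* Main.v *)
Require Import Defs.
From mathcomp Require Import all_boot zify.
From Stdlib Require Import Reals Lra Lia Psatz ZArith.
From mathcomp Require Import all_boot zify.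

Lemma sigma_cat u v : Defs.sigma (u ++ v) = Defs.sigma u ++ Defs.sigma v.
Proof. by rewrite /Defs.sigma map_cat flatten_cat. Qed.

Lemma iter_sigma_cat m u v : iter m Defs.sigma (u ++ v) = iter m Defs.sigma u ++ iter m Defs.sigma v.
Proof. elim: m => [|m IH] //=. by rewrite IH sigma_cat. Qed.

Definition Sw m := iter m Defs.sigma [:: 0].

Lemma S_rec m : Sw m.+2 = Sw m.+1 ++ Sw m.
Proof.
rewrite /Sw.
have -> : iter m.+2 Defs.sigma [::0] = iter m.+1 Defs.sigma [::0;1] by rewrite iterSr.
rewrite -cat1s iter_sigma_cat. congr (_ ++ _). by rewrite iterSr.
Qed.

Lemma size_S m : size (Sw m) = fib m.+2 /\ size (Sw m.+1) = fib m.+3.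
Proof.
elim: m => [|m [IH1 IH2]]; first by [].
split => //. by rewrite S_rec size_cat IH1 IH2 /= addnC.
Qed.

Open Scope R_scope.
Definition phi : R := (1 + sqrt 5)/2.
Definition rho : R := phi - 1.
Definition beta : R := 2 - phi.
Definition th (c : nat) : R := frac_part (INR c * phi).
Definition bw (i : nat) : nat := if Rlt_dec (th i.+1) beta then 1%N else 0%N.

Lemma phi_facts : phi * phi = phi + 1 /\ 1.6 < phi < 1.62.
Proof.
have h := sqrt_sqrt 5 ltac:(lra). have h0 := sqrt_pos 5.
rewrite /phi; split; first nra.
split; nra.
Qed.

Lemma rho_facts : rho * phi = 1 /\ rho * rho = 1 - rho /\ 0.6 < rho < 0.62 /\ beta = rho * rho.
Proof. have [h1 h2] := phi_facts. rewrite /rho /beta. split; [nra|split; [nra|split; nra]]. Qed.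

Lemma frac_eq r z : IZR z <= r < IZR z + 1 -> frac_part r = r - IZR z.
Proof.
move=> [h1 h2]. rewrite /frac_part /Int_part.
have -> : up r = (z + 1)%Z by symmetry; apply: tech_up; rewrite plus_IZR; lra.
rewrite minus_IZR plus_IZR. ring.
Qed.

Lemma frac_int r : exists z, r = frac_part r + IZR z.
Proof. exists (Int_part r). rewrite /frac_part. ring. Qed.

Lemma frac_rng r : 0 <= frac_part r < 1.
Proof. have [h1 h2] := base_fp r. lra. Qed.

Lemma INR_fibSS n : INR (fib n.+2) = INR (fib n.+1) + INR (fib n).
Proof. have -> : fib n.+2 = (fib n.+1 + fib n)%coq_nat by []. by rewrite plus_INR. Qed.

Lemma fib_gen x : x * x = x + 1 -> forall n,
  INR (fib n.+1) - INR (fib n) * x = (1 - x) ^ n.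
Proof.
move=> hx.
have hy : (1 - x) * (1 - x) = (1 - x) + 1 by nra.
suff H : forall n, INR (fib n.+1) - INR (fib n) * x = (1 - x) ^ n /\
                   INR (fib n.+2) - INR (fib n.+1) * x = (1 - x) ^ n.+1.
  by move=> n; case: (H n).
elim=> [|n [IH1 IH2]].
  rewrite /= /INR. split; lra.
split => //.
rewrite INR_fibSS INR_fibSS.
have -> : (1 - x) ^ n.+2 = (1 - x) ^ n.+1 + (1 - x) ^ n.
  rewrite /= -Rmult_assoc hy. ring.
rewrite -IH1 -IH2 INR_fibSS. ring.
Qed.

Lemma fib_psi n : INR (fib n.+1) - INR (fib n) * phi = (- rho) ^ n.
Proof.
have [h _] := phi_facts. rewrite fib_gen //. congr (_ ^ _). rewrite /rho. ring.
Qed.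

Lemma binet n : (2 * phi - 1) * INR (fib n) = phi ^ n - (- rho) ^ n.
Proof.
have [h _] := phi_facts.
have h2 : (1 - phi) * (1 - phi) = (1 - phi) + 1 by nra.
have := @fib_gen _ h2 n. have := fib_psi n.
have -> : 1 - (1 - phi) = phi by ring.
move=> e1 e2. lra.
Qed.

Lemma phirho_pow n : phi ^ n * rho ^ n = 1.
Proof. have [h _] := rho_facts. by rewrite -Rpow_mult_distr Rmult_comm h pow1. Qed.

Lemma pow_sign m : (- rho) ^ m = rho ^ m \/ (- rho) ^ m = - rho ^ m.
Proof.
elim: m => [|m [IH|IH]] /=; [left; ring | right; rewrite IH; ring | left; rewrite IH; ring].
Qed.

Lemma pow_le1 x m : 0 <= x <= 1 -> 0 <= x ^ m <= 1.
Proof.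
move=> hx; elim: m => [|m IH] /=; first lra.
split; nra.
Qed.

Lemma rho_pow_pos m : 0 < rho ^ m.
Proof. have [_ [_ [h _]]] := rho_facts. apply: pow_lt. lra. Qed.

Lemma Zfib n : Z.of_nat (fib n.+2) = (Z.of_nat (fib n.+1) + Z.of_nat (fib n))%Z.
Proof. have -> : fib n.+2 = (fib n.+1 + fib n)%coq_nat by []. by rewrite Nat2Z.inj_add. Qed.

Lemma cassini j :
  ((Z.of_nat (fib j) * Z.of_nat (fib j.+2) - Z.of_nat (fib j.+1) ^ 2) *
   (Z.of_nat (fib j) * Z.of_nat (fib j.+2) - Z.of_nat (fib j.+1) ^ 2) = 1)%Z.
Proof.
elim: j => [|j IH]; first by vm_compute.
rewrite (Zfib j.+1). rewrite (Zfib j) in IH *. nia.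
Qed.

Lemma best_approx j (c : nat) (a : Z) : (0 < j)%N -> (0 < c)%N -> (c < fib j.+1)%N ->
  rho ^ j <= Rabs (INR c * phi - IZR a).
Proof.
move=> hj hc0 hc1.
set Fj := Z.of_nat (fib j). set F1 := Z.of_nat (fib j.+1). set F2 := Z.of_nat (fib j.+2).
set C := Z.of_nat c.
set e := (Fj * F2 - F1 ^ 2)%Z.
have he : (e * e = 1)%Z by apply: cassini.
set u := (e * (C * F2 - a * F1))%Z. set v := (e * (a * Fj - C * F1))%Z.
have hC : C = (u * Fj + v * F1)%Z.
  have -> : (u * Fj + v * F1 = e * e * C)%Z by rewrite /u /v /e; ring.
  by rewrite he; ring.
have ha : a = (u * F1 + v * F2)%Z.
  have -> : (u * F1 + v * F2 = e * e * a)%Z by rewrite /u /v /e; ring.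
  by rewrite he; ring.
have hFj : (1 <= Fj)%Z.
  rewrite /Fj. case: j hj {Fj F1 F2 e he u v hC ha hc1} => // j _.
  have : (0 < fib j.+1)%N. by elim: j => // j IH; rewrite -[fib j.+2]/(fib j.+1 + fib j)%N addn_gt0 IH.
  move/ltP. lia.
have hc0' : (1 <= C)%Z by rewrite /C; move/ltP: hc0; lia.
have hc1' : (C < F1)%Z by rewrite /C /F1; move/ltP: hc1; lia.
have huv : ((1 <= u /\ v <= 0) \/ (u <= -1 /\ 1 <= v))%Z.
  case: (Z.le_gt_cases 1 v) => hv.
    right; split => //. have : (v * F1 >= F1)%Z by nia. nia.
  case: (Z.le_gt_cases v (-1)) => hv'.
    left; split; last lia. have : (v * F1 <= - F1)%Z by nia. nia.
  have hv0 : v = 0%Z by lia. rewrite hv0 in hC. left; split; [nia|lia].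
have hpsi1 := fib_psi j. have hpsi2 := fib_psi j.+1.
have E : INR c * phi - IZR a = (- rho) ^ j * (IZR v * rho - IZR u).
  rewrite INR_IZR_INZ -/C hC ha !plus_IZR !mult_IZR.
  rewrite !INR_IZR_INZ -/Fj -/F1 -/F2 in hpsi1 hpsi2.
  have e2 : (- rho) ^ j.+1 = - rho * (- rho) ^ j by [].
  rewrite e2 -hpsi1 in hpsi2. rewrite -hpsi1. rewrite /rho in hpsi2 *. nra.
rewrite E Rabs_mult.
have -> : Rabs ((- rho) ^ j) = rho ^ j.
  have hp := rho_pow_pos j.
  case: (pow_sign j) => ->; [rewrite Rabs_right | rewrite Rabs_Ropp Rabs_right]; lra.
have hp := rho_pow_pos j. have [_ [_ [hr _]]] := rho_facts.
suff : 1 <= Rabs (IZR v * rho - IZR u) by nra.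
case: huv => [[h1 h2]|[h1 h2]].
  have h1' := IZR_le _ _ h1. have h2' := IZR_le _ _ h2.
  rewrite Rabs_left1; nra.
have h1' := IZR_le _ _ h1. have h2' := IZR_le _ _ h2.
rewrite Rabs_right; nra.
Qed.

Lemma fib_pos n : (0 < fib n.+1)%N.
Proof. elim: n => // n IH. rewrite -[fib n.+2]/(fib n.+1 + fib n)%N. lia. Qed.

Lemma fib_lb n : (n.+1 <= fib n.+2)%N.
Proof.
elim: n => // n IH. rewrite -[fib n.+3]/(fib n.+2 + fib n.+1)%N. have := fib_pos n. lia.
Qed.

Lemma fibSS n : fib n.+2 = (fib n.+1 + fib n)%N.
Proof. by []. Qed.

Lemma INR_add a b : INR (a + b)%N = INR a + INR b.
Proof. exact: plus_INR. Qed.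

Lemma th_dist j c : (0 < j)%N -> (0 < c)%N -> (c < fib j.+1)%N ->
  rho ^ j <= th c <= 1 - rho ^ j.
Proof.
move=> hj hc0 hc1. rewrite /th.
have [z hz] := frac_int (INR c * phi).
have h1 := best_approx j c z hj hc0 hc1.
have h2 := best_approx j c (z + 1) hj hc0 hc1.
have hr := frac_rng (INR c * phi).
rewrite hz plus_IZR in h2. rewrite hz in h1.
replace (frac_part (INR c * phi) + IZR z - IZR z) with (frac_part (INR c * phi)) in h1 by ring.
rewrite Rabs_right in h1; last lra.
rewrite Rabs_left1 in h2; lra.
Qed.

Lemma th_add_int c (d : nat) (w : Z) (x : R) :
  INR d * phi = IZR w + x -> 0 <= th c + x < 1 -> th (c + d)%N = th c + x.
Proof.
move=> hd hr. rewrite /th in hr *. rewrite INR_add Rmult_plus_distr_r hd.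
have [z hz] := frac_int (INR c * phi).
rewrite {1}hz. rewrite (@frac_eq _ (z + w)); first by rewrite plus_IZR; ring.
rewrite plus_IZR; split; lra.
Qed.

Lemma bw_shift m i : (2 <= m)%N -> (i < fib m.+2)%N -> bw (i + fib m.+3) = bw i.
Proof.
move=> hm hi. rewrite /bw.
have hF : (fib m.+2 + 1 < fib m.+3)%N.
  rewrite (fibSS m.+1). have := fib_lb m.-1. have -> : m.-1.+2 = m.+1 by lia. lia.
have e1 : (i + fib m.+3).+1 = (i.+1 + fib m.+3)%N by lia.
rewrite e1.
set e := - (- rho) ^ m.+3.
have hpsi := fib_psi m.+3.
have hd : INR (fib m.+3) * phi = IZR (Z.of_nat (fib m.+4)) + e.
  rewrite -INR_IZR_INZ /e. lra.
have hdist := @th_dist m.+2 i.+1 erefl erefl ltac:(lia).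
have hdist2 : rho ^ m.+2 <= Rabs (th i.+1 - beta).
  have [z hz] := frac_int (INR i.+1 * phi).
  have := @best_approx m.+2 i.+2 (z + 2) erefl erefl ltac:(lia).
  have -> : INR i.+2 = INR i.+1 + 1 by rewrite S_INR.
  rewrite /th /beta plus_IZR.
  have -> : (INR i.+1 + 1) * phi - (IZR z + 2) = INR i.+1 * phi - IZR z + phi - 2 by ring.
  rewrite {1}hz.
  have -> : frac_part (INR i.+1 * phi) + IZR z - IZR z + phi - 2 = frac_part (INR i.+1 * phi) - (2 - phi) by ring.
  done.
have he : Rabs e < rho ^ m.+2.
  rewrite /e Rabs_Ropp. have hp := rho_pow_pos m.+2. have [_ [_ [hr _]]] := rho_facts.
  have -> : (- rho) ^ m.+3 = - rho * (- rho) ^ m.+2 by [].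
  rewrite Rabs_mult Rabs_Ropp (Rabs_right rho); last lra.
  case: (pow_sign m.+2) => ->; [rewrite Rabs_right | rewrite Rabs_Ropp Rabs_right]; nra.
have hx : 0 <= th i.+1 + e < 1.
  clearbody e. move: he; rewrite /Rabs; case: Rcase_abs => h0 he; split; lra.
rewrite (@th_add_int i.+1 (fib m.+3) _ e hd hx).
move: he hdist2; rewrite /Rabs; case: Rcase_abs => h0 he; case: Rcase_abs => h00 hd2;
case: Rlt_dec => h1; case: Rlt_dec => h2 //; lra.
Qed.

Lemma th_val c z : IZR z <= INR c * phi < IZR z + 1 -> th c = INR c * phi - IZR z.
Proof. move=> h. exact: frac_eq. Qed.

Lemma bw_small : [/\ bw 0 = 0%N, bw 1 = 1%N, bw 2 = 0%N, bw 3 = 0%N & bw 4 = 1%N].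
Proof.
have [_ [hp1 hp2]] := phi_facts.
have hb : beta = 2 - phi by [].
rewrite /bw.
have h1 : th 1 = INR 1 * phi - IZR 1 by apply: th_val; rewrite /= ; split; lra.
have h2 : th 2 = INR 2 * phi - IZR 3 by apply: th_val; rewrite /= ; split; lra.
have h3 : th 3 = INR 3 * phi - IZR 4 by apply: th_val; rewrite /= ; split; lra.
have h4 : th 4 = INR 4 * phi - IZR 6 by apply: th_val; rewrite /= ; split; lra.
have h5 : th 5 = INR 5 * phi - IZR 8 by apply: th_val; rewrite /= ; split; lra.
rewrite h1 h2 h3 h4 h5 /= hb.
split; case: Rlt_dec => h //=; lra.
Qed.

Lemma P_all m i : (i < fib m.+2)%N -> nth 0%N (Sw m) i = bw i.
Proof.
have [b0 b1 b2 b3 b4] := bw_small.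
elim/ltn_ind: m i => m IH i hi.
case: m IH hi => [|[|[|[|m]]]] IH hi.
- have -> : Sw 0 = [:: 0%N] by []. case: i hi => [|i] // _. all: rewrite ?b0 //.
- have -> : Sw 1 = [:: 0; 1]%N by []. case: i hi => [|[|i]] // _; rewrite ?b0 ?b1 //.
- have -> : Sw 2 = [:: 0; 1; 0]%N by []. case: i hi => [|[|[|i]]] // _; rewrite ?b0 ?b1 ?b2 //.
- have -> : Sw 3 = [:: 0; 1; 0; 0; 1]%N by [].
  case: i hi => [|[|[|[|[|i]]]]] // _; rewrite ?b0 ?b1 ?b2 ?b3 ?b4 //.
rewrite S_rec nth_cat.
have [s1 _] := size_S m.+3.
rewrite s1.
case: ltnP => h.
  by apply: IH.
rewrite IH //; last first.
  move: hi. rewrite (fibSS m.+4). lia.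
have -> : i = ((i - fib m.+4.+1) + fib m.+4.+1)%N by lia.
rewrite addnK bw_shift //. move: hi. rewrite (fibSS m.+4). lia.
Qed.

Lemma fibw_bw i : fibw i = bw i.
Proof.
rewrite /fibw -/(Sw i.+1). apply: P_all. have := fib_lb i.+1. lia.
Qed.

Lemma cross_up (Y : nat -> R) T N : Y 0%N < T -> T <= Y N -> exists i, Y i < T <= Y i.+1.
Proof.
elim: N => [|N IH] h0 hN; first lra.
case: (Rlt_le_dec (Y N) T) => h.
  by exists N.
exact: IH.
Qed.

Lemma cross_down (Y : nat -> R) T N : T <= Y 0%N -> Y N < T -> exists i, T <= Y i /\ Y i.+1 < T.
Proof.
elim: N => [|N IH] h0 hN; first lra.
case: (Rlt_le_dec (Y N) T) => h.
  exact: IH.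
by exists N.
Qed.

Fixpoint jw (m K : nat) : nat :=
  match K with
  | 0 => 0%N
  | K'.+1 => if (jw m K' < fib m)%N then (jw m K' + fib m.+1)%N else (jw m K' - fib m)%N
  end.

Fixpoint Dw (m K : nat) : R :=
  match K with
  | 0 => 0
  | K'.+1 => Dw m K' + (if (jw m K' < fib m)%N then rho * (- rho) ^ m else (- rho) ^ m)
  end.

Lemma jwS m K : jw m K.+1 = if (jw m K < fib m)%N then (jw m K + fib m.+1)%N else (jw m K - fib m)%N.
Proof. by []. Qed.

Lemma DwS m K : Dw m K.+1 = Dw m K + (if (jw m K < fib m)%N then rho * (- rho) ^ m else (- rho) ^ m).
Proof. by []. Qed.

Lemma jw_lt m K : (jw m K < fib m.+2)%N.
Proof.
elim: K => [|K IH]; first exact: (fib_pos m.+1).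
rewrite jwS (fibSS m) in IH *. case: (ltnP (jw m K) (fib m)) => h; lia.
Qed.

Lemma jw_int m K : exists z, INR (jw m K) * phi = Dw m K + IZR z.
Proof.
elim: K => [|K [z IH]]; first by exists 0%Z; rewrite /=; ring.
rewrite jwS DwS.
have h1 := fib_psi m. have h2 := fib_psi m.+1.
have e2 : (- rho) ^ m.+1 = - rho * (- rho) ^ m by [].
case: ifP => h.
  exists (z + Z.of_nat (fib m.+2))%Z.
  rewrite INR_add Rmult_plus_distr_r IH plus_IZR -INR_IZR_INZ.
  rewrite e2 in h2. lra.
exists (z - Z.of_nat (fib m.+1))%Z.
have hle : (fib m <= jw m K)%N by rewrite leqNgt h.
rewrite minus_INR; last by apply/leP.
rewrite Rmult_minus_distr_r IH minus_IZR -INR_IZR_INZ. lra.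
Qed.

Lemma th_of c y z w : INR c * phi = y + IZR z -> IZR w <= y < IZR w + 1 -> th c = y - IZR w.
Proof.
move=> h1 h2. rewrite /th h1 (@frac_eq _ (z + w)); rewrite plus_IZR; [ring | split; lra].
Qed.

Lemma cover m c0 lo hi : (2 <= m)%N -> 0 <= lo -> hi <= 1 -> rho ^ m <= hi - lo ->
  exists r, (r < fib m.+2)%N /\ lo <= th (c0 + r) < hi.
Proof.
move=> hm hlo hhi hG.
have hGp := rho_pow_pos m. have [_ [_ [hr _]]] := rho_facts.
set G := rho ^ m in hG hGp.
set Y := fun K => th c0 + Dw m K.
have hY : forall K, exists z, INR (c0 + jw m K) * phi = Y K + IZR z.
  move=> K. have [z1 h1] := frac_int (INR c0 * phi). have [z2 h2] := jw_int m K.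
  exists (z1 + z2)%Z. rewrite INR_add Rmult_plus_distr_r h1 h2 plus_IZR /Y /th. ring.
have hth0 := frac_rng (INR c0 * phi).
have hY0 : Y 0%N = th c0 by rewrite /Y /=; ring.
have hrG : 0 < rho * G by nra.
have [N hN] := INR_archimed (rho * G) 2 hrG.
case: (pow_sign m) => hs.
- have hstep : forall K, rho * G <= Y K.+1 - Y K <= G.
    move=> K. rewrite /Y DwS hs -/G. case: ifP => _; split; nra.
  have hlow : forall K, Y 0%N + INR K * (rho * G) <= Y K.
    elim=> [|K IH]; first by rewrite /=; lra.
    rewrite S_INR. have := hstep K. lra.
  have hNl := hlow N. rewrite hY0 /th in hNl.
  have [i [hi1 hi2]] : exists i, Y i < lo + 1 <= Y i.+1.
    apply: (@cross_up Y (lo + 1) N); last lra.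
    rewrite /Y /th /=; lra.
  have hsi := hstep i.
  exists (jw m i.+1). split; first exact: jw_lt.
  have [z hz] := hY i.+1.
  rewrite (@th_of _ _ _ 1 hz); rewrite /=; split; lra.
- have hstep : forall K, - G <= Y K.+1 - Y K <= - (rho * G).
    move=> K. rewrite /Y DwS hs -/G. case: ifP => _; split; nra.
  have hlow : forall K, Y K <= Y 0%N - INR K * (rho * G).
    elim=> [|K IH]; first by rewrite /=; lra.
    rewrite S_INR. have := hstep K. lra.
  have hNl := hlow N. rewrite hY0 /th in hNl.
  have [i [hi1 hi2]] : exists i, hi - 1 <= Y i /\ Y i.+1 < hi - 1.
    apply: (@cross_down Y (hi - 1) N); last lra.
    rewrite /Y /th /=; lra.
  have hsi := hstep i.
  exists (jw m i.+1). split; first exact: jw_lt.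
  have [z hz] := hY i.+1.
  rewrite (@th_of _ _ _ (-1) hz); rewrite /=; split; lra.
Qed.

Lemma rho_pow_le2 m : (2 <= m)%N -> rho ^ m <= rho * rho.
Proof.
move=> hm. have [_ [_ [hr _]]] := rho_facts.
have -> : rho ^ m = rho ^ (m - 2) * rho ^ 2 by rewrite -pow_add; congr (_ ^ _); lia.
have := @pow_le1 rho (m - 2) ltac:(lra). rewrite /=. nra.
Qed.

Lemma core m t : (2 <= m)%N -> 1 <= t ->
  t * 2 + 2 <= (2 * phi - 1) * INR (fib m.+1) ->
  let eta := t * 2 * (INR (fib m.+1) * phi - INR (fib m.+2)) in
  exists lo hi, [/\ 0 <= lo, hi <= 1, rho ^ m <= hi - lo &
    forall th0, lo <= th0 < hi -> 0 <= th0 + eta < 1 /\ ((th0 < beta) <-> ~ (th0 + eta < beta))].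
Proof.
move=> hm ht hb eta.
have [hrp [hrr [hr hbeta]]] := rho_facts.
have hG := @rho_pow_le2 m hm. have hGp := rho_pow_pos m.
have hbin := binet m.+1. have hpr := phirho_pow m.+1.
have hpsi := fib_psi m.+1.
have e1 : (- rho) ^ m.+1 = - rho * (- rho) ^ m by [].
have e2 : rho ^ m.+1 = rho * rho ^ m by [].
set G := rho ^ m in hG hGp e2.
have hb2 : (t * 2 + 2) * rho ^ m.+1 <= 1 - (- rho) ^ m.+1 * rho ^ m.+1.
  have hq : 0 < rho ^ m.+1 by apply: rho_pow_pos.
  rewrite hbin in hb.
  have : (t * 2 + 2) * rho ^ m.+1 <= (phi ^ m.+1 - (- rho) ^ m.+1) * rho ^ m.+1
    by apply: Rmult_le_compat_r; lra.
  rewrite Rmult_minus_distr_r hpr. lra.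
rewrite e1 e2 in hb2. rewrite e1 in hpsi.
have heta : eta = t * 2 * (rho * (- rho) ^ m).
  rewrite /eta. have -> : INR (fib m.+1) * phi - INR (fib m.+2) = rho * (- rho) ^ m by lra. done.
clearbody eta.
have htr : 1 <= t * 2 * rho by nra.
case: (pow_sign m) => hs; rewrite hs -/G in heta hb2; rewrite -/G; clearbody G.
-
  have h1 : G <= eta by rewrite heta; nra.
  have h2 : eta <= 1 - G.
    rewrite heta.
    have : rho * rho * G <= rho * rho * (rho * rho) by nra.
    nra.
  exists (Rmax 0 (beta - eta)), (Rmin beta (1 - eta)).
  split.
  + exact: Rmax_l.
  + rewrite /Rmin; case: Rle_dec; lra.
  + rewrite /Rmin /Rmax; case: Rle_dec; case: Rle_dec; nra.
  + move=> th0; rewrite /Rmin /Rmax; case: Rle_dec; case: Rle_dec => ? ? [? ?];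
    (split; [split; nra| split; nra]).
- have h1 : G <= - eta by rewrite heta; nra.
  have h2 : - eta <= 1 - G by rewrite heta; nra.
  exists (Rmax beta (- eta)), (Rmin 1 (beta - eta)).
  split.
  + rewrite /Rmax; case: Rle_dec; nra.
  + exact: Rmin_l.
  + rewrite /Rmin /Rmax; case: Rle_dec; case: Rle_dec; nra.
  + move=> th0; rewrite /Rmin /Rmax; case: Rle_dec; case: Rle_dec => ? ? [? ?];
    (split; [split; nra| split; nra]).
Qed.

Lemma fib_mono m : (fib m <= fib m.+1)%N.
Proof. case: m => // m. rewrite (fibSS m). lia. Qed.

Lemma bound_real t k F : ((2 * k) ^ 2 <= 5 * F ^ 2)%N -> (t < k)%N ->
  INR t * 2 + 2 <= (2 * phi - 1) * INR F.
Proof.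
move=> hk htk0.
have sq : forall a, (a ^ 2 = a * a)%N by move=> a; rewrite expnS expn1.
have hk' : INR (2 * k) * INR (2 * k) <= 5 * (INR F * INR F).
  rewrite -!mult_INR. have -> : 5%R = INR 5 by rewrite /INR; lra.
  rewrite -mult_INR. apply: le_INR. apply/leP. move: hk. rewrite !sq. nia.
have htk : INR t + 1 <= INR k.
  rewrite -S_INR. apply: le_INR. apply/leP. lia.
rewrite mult_INR in hk'.
have [h1 [h2 h3]] := phi_facts.
have hF0 := pos_INR F. have hk0 := pos_INR k.
have h5 : (2 * phi - 1) * (2 * phi - 1) = 5 by nra.
have : INR 2 * INR k <= (2 * phi - 1) * INR F.
  apply: Rsqr_incr_0_var; rewrite /Rsqr; try nra.
have h22 : INR 2 = 2 by rewrite /=; lra.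
rewrite h22; lra.
Qed.

Lemma hd_lemma t F1 F2 : INR (t * (2 * F1)) * phi =
  IZR (Z.of_nat (t * (2 * F2))) + INR t * 2 * (INR F1 * phi - INR F2).
Proof. rewrite -INR_IZR_INZ !mult_INR /INR -/INR. ring. Qed.

Lemma final_bw c d t F1 F2 lo hi :
  lo <= th c < hi ->
  (forall th0, lo <= th0 < hi -> 0 <= th0 + INR t * 2 * (INR F1 * phi - INR F2) < 1 /\
     ((th0 < beta) <-> ~ (th0 + INR t * 2 * (INR F1 * phi - INR F2) < beta))) ->
  d = (t * (2 * F1))%N ->
  (if Rlt_dec (th c) beta then 1%N else 0%N) <> (if Rlt_dec (th (c + d)%N) beta then 1%N else 0%N).
Proof.
move=> hth hprop ->.
have [[hx1 hx2] hiff] := hprop _ hth.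
rewrite (@th_add_int c (t * (2 * F1))%N _ _ (hd_lemma t F1 F2)); last by split.
case: Rlt_dec => a; case: Rlt_dec => b //; first [discriminate | (exfalso; tauto)].
Qed.

Close Scope R_scope.

Lemma sqn a : a ^ 2 = a * a.
Proof. by rewrite expnS expn1. Qed.


Theorem proposition17 :
  forall (x n k : nat), 0 < n ->
    (2 * k) ^ 2 <= 5 * fib n ^ 2 < (2 * k + 2) ^ 2 ->
    antipower_at x k (2 * fib n).
Proof.
move=> x n k hn /andP [hk _] i j hij hjk.
case: (leqP n 2) => hn2.
  have hf : fib n = 1 by case: n hn hn2 {hk} => [|[|[|]]].
  rewrite hf !sqn in hk. exfalso. nia.
have [m en hm] : exists2 m, n = m.+1 & 2 <= m by exists n.-1; lia.
subst n.
have [t ht ej] : exists2 t, 1 <= t & j = i + t by exists (j - i); lia.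
subst j.
set F := fib m.+1.
apply/negP => /eqP E.
set p := x + i * (2 * F).
set d := t * (2 * F).
have hE : forall r, r < 2 * F -> fibw (p + r) = fibw (p + d + r).
  move=> r hr. have := congr1 (fun s => nth 0 s r) E.
  rewrite /= !nth_mkseq // mulnDl addnA. done.
have hbR := @bound_real t k F hk ltac:(lia).
have [lo [hi [hlo hhi hG hprop]]] := @core m (INR t) hm (le_INR 1 t ltac:(apply/leP; lia)) hbR.
have [r [hr hth]] := @cover m p.+1 lo hi hm hlo hhi hG.
have hr2 : r < 2 * F by have := fib_mono m; rewrite /F (fibSS m) in hr *; lia.
have := hE r hr2. rewrite !fibw_bw /bw.
have e1 : (p + d + r).+1 = (p.+1 + r + d)%N by lia.
have e2 : (p + r).+1 = (p.+1 + r)%N by lia.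
rewrite e1 e2.
exact: (@final_bw (p.+1 + r) d t (fib m.+1) (fib m.+2) lo hi hth hprop erefl).
Qed.
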